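(* Let $(E,\mu)$ and $(F,\nu)$ be fuzzy Riesz spaces and let $T$ be a fuzzy Riesz homomorphism of $E$ onto $F$. The following are equivalent: (1) $T$ is a fuzzy Riesz $\sigma$-homomorphism; (2) for every fuzzy $\sigma$-ideal $A$ in $F$, the inverse image $T^{-1}(A)$ is a fuzzy $\sigma$-ideal in $E$; (3) the kernel $\mathrm{Ker}\,T=\{x\in E: Tx=0\}$ is a fuzzy $\sigma$-ideal in $E$.
   Context: A fuzzy order on a real vector space $E$ is a map $\mu:E\times E\to[0,1]$ with $\mu(x,x)=1$; $\mu(x,y)+\mu(y,x)>1$ implies $x=y$; and $\mu(x,z)\ge\sup_{y}\min(\mu(x,y),\mu(y,z))$. Write $x\le y$ for $\mu(x,y)>\frac12$; suprema/infima are taken with respect to this relation. $(E,\mu)$ is a fuzzy ordered linear space if $\mu(x_1,x_2)>\frac12$ implies $\mu(x_1,x_2)\le\mu(x_1+x,x_2+x)$ for all $x$ and $\mu(x_1,x_2)\le\mu(\alpha x_1,\alpha x_2)$ for all $\alpha>0$; it is a fuzzy Riesz space if $x\vee y=\sup\{x,y\}$ and $x\wedge y=\inf\{x,y\}$ exist for all $x,y$. $E^+=\{x:0\le x\}$, $A^+=A\cap E^+$, $|x|=x\vee(-x)$. $x_n\uparrow x$ means $x_n\le x_{n+1}$ for all $n$ and $x=\sup_n x_n$. A fuzzy ideal is a vector subspace $A$ such that $\mu(|x|,|y|)>\frac12$ and $y\in A$ imply $x\in A$; it is a fuzzy $\sigma$-ideal if $\{x_n\}\subseteq A^+$ and $x_n\uparrow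 x$ in $E$ imply $x\in A$. A fuzzy Riesz homomorphism is a linear map with $T(x\vee y)=Tx\vee Ty$; it is a fuzzy Riesz $\sigma$-homomorphism if $x=\sup_n x_n$ ($n=1,2,\dots$) in $E$ implies $Tx=\sup_n Tx_n$ in $F$. *)

(* Defs.v *)
From HB Require Import structures.
From mathcomp Require Import all_boot all_order all_algebra.
From mathcomp Require Import boolp classical_sets reals.
Set Implicit Arguments. Unset Strict Implicit. Unset Printing Implicit Defensive.
Import Order.TTheory GRing.Theory Num.Theory.
Local Open Scope ring_scope.
Local Open Scope classical_set_scope.

Section FuzzyDefs.
Variables (R : realType) (E : lmodType R).
Implicit Types (mu : E -> E -> R) (A S : set E).

(* fuzzy order; the transitivity sup-condition mu(x,z) >= sup_y min(..)
   is written out as: every min(mu x y, mu y z) is <= mu x z *)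
Definition fuzzy_order mu :=
  [/\ (forall x y, 0 <= mu x y <= 1),
      (forall x, mu x x = 1),
      (forall x y, mu x y + mu y x > 1 -> x = y) &
      (forall x y z, Num.min (mu x y) (mu y z) <= mu x z)].

(* the crisp order x <= y *)
Definition fle mu (x y : E) : Prop := mu x y > 2^-1.

Definition is_sup mu S (s : E) :=
  (forall x, S x -> fle mu x s) /\
  (forall u, (forall x, S x -> fle mu x u) -> fle mu s u).

Definition is_inf mu S (s : E) :=
  (forall x, S x -> fle mu s x) /\
  (forall u, (forall x, S x -> fle mu u x) -> fle mu u s).

Definition fuzzy_ordered_linear_space mu :=
  fuzzy_order mu /\
  forall x1 x2, mu x1 x2 > 2^-1 ->
    (forall x, mu x1 x2 <= mu (x1 + x) (x2 + x)) /\
    (forall a : R, 0 < a -> mu x1 x2 <= mu (a *: x1) (a *: x2)).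

Definition fuzzy_riesz_space mu :=
  fuzzy_ordered_linear_space mu /\
  forall x y, (exists s, is_sup mu [set x; y] s) /\ (exists i, is_inf mu [set x; y] i).

(* |x| = x \/ (-x), stated relationally: a is |x| *)
Definition is_abs mu (x a : E) := is_sup mu [set x; - x] a.

Definition subspace A :=
  [/\ A 0, (forall x y, A x -> A y -> A (x + y)) & (forall (a : R) x, A x -> A (a *: x))].

Definition fuzzy_ideal mu A :=
  subspace A /\
  forall x y ax ay, is_abs mu x ax -> is_abs mu y ay -> fle mu ax ay -> A y -> A x.

Definition incr_to mu (xn : nat -> E) (x : E) :=
  (forall n, fle mu (xn n) (xn n.+1)) /\ is_sup mu (range xn) x.

Definition fuzzy_sigma_ideal mu A :=
  fuzzy_ideal mu A /\
  forall (xn : nat -> E) x, (forall n, A (xn n) /\ fle mu 0 (xn n)) ->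
    incr_to mu xn x -> A x.

End FuzzyDefs.

Section FuzzyHom.
Variables (R : realType) (E F : lmodType R).

(* T(x \/ y) = Tx \/ Ty, stated relationally (suprema are unique) *)
Definition fuzzy_riesz_hom (mu : E -> E -> R) (nu : F -> F -> R) (T : {linear E -> F}) :=
  forall x y s, is_sup mu [set x; y] s -> is_sup nu [set T x; T y] (T s).

Definition fuzzy_riesz_sigma_hom (mu : E -> E -> R) (nu : F -> F -> R) (T : {linear E -> F}) :=
  fuzzy_riesz_hom mu nu T /\
  forall (xn : nat -> E) x, is_sup mu (range xn) x -> is_sup nu (range (fun n => T (xn n))) (T x).

End FuzzyHom.

(* Main.v *)
Require Import Defs.
From HB Require Import structures.
From mathcomp Require Import all_boot all_order all_algebra.
From mathcomp Require Import boolp classical_sets reals.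
From mathcomp Require Import lra.
Set Implicit Arguments. Unset Strict Implicit. Unset Printing Implicit Defensive.
Import Order.TTheory GRing.Theory Num.Theory.
Local Open Scope ring_scope.
Local Open Scope classical_set_scope.

Section Basics.
Variables (R : realType) (E : lmodType R) (mu : E -> E -> R).
Hypothesis Hmu : fuzzy_ordered_linear_space mu.

Lemma fle_refl x : fle mu x x.
Proof. case: Hmu => [[_ h1 _ _] _]; rewrite /fle h1; lra. Qed.

Lemma fle_trans x y z : fle mu x y -> fle mu y z -> fle mu x z.
Proof.
case: Hmu => [[_ _ _ h] _]; rewrite /fle => a b.
by apply: (lt_le_trans _ (h x y z)); rewrite lt_min a b.
Qed.

Lemma fle_anti x y : fle mu x y -> fle mu y x -> x = y.
Proof. case: Hmu => [[_ _ h _] _]; rewrite /fle => a b; apply: h; lra. Qed.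

Lemma fle_add c x y : fle mu x y -> fle mu (x + c) (y + c).
Proof. case: Hmu => [_ h] a; rewrite /fle; exact: lt_le_trans a ((h _ _ a).1 c). Qed.

Lemma fle_addK x y c : fle mu (x + c) (y + c) -> fle mu x y.
Proof. by move=> /(fle_add (- c)); rewrite !addrK. Qed.

Lemma sup2_ub x y s : is_sup mu [set x; y] s -> fle mu x s /\ fle mu y s.
Proof. by case=> h _; split; apply: h; [left|right]. Qed.

Lemma sup2_least x y s u : is_sup mu [set x; y] s -> fle mu x u -> fle mu y u -> fle mu s u.
Proof. by case=> _ h a b; apply: h => z [->|->]. Qed.

Lemma sup2_intro x y s : fle mu x s -> fle mu y s ->
  (forall u, fle mu x u -> fle mu y u -> fle mu s u) -> is_sup mu [set x; y] s.
Proof.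
move=> a b h; split; first by move=> z [->|->].
by move=> u hu; apply: h; apply: hu; [left|right].
Qed.

Lemma sup_unique S s t : is_sup mu S s -> is_sup mu S t -> s = t.
Proof. by case=> u1 l1 [u2 l2]; apply: fle_anti; [apply: l1|apply: l2]. Qed.

Lemma sup_le x y : fle mu x y -> is_sup mu [set x; y] y.
Proof. by move=> h; apply: sup2_intro => //; apply: fle_refl. Qed.

End Basics.

Section Main.
Variables (R : realType) (E F : lmodType R) (mu : E -> E -> R) (nu : F -> F -> R)
  (T : {linear E -> F}).
Hypothesis Hmu : fuzzy_ordered_linear_space mu.
Hypothesis Hnu : fuzzy_ordered_linear_space nu.
Hypothesis Hhom : fuzzy_riesz_hom mu nu T.

Lemma monoT x y : fle mu x y -> fle nu (T x) (T y).
Proof. by move=> h; have := Hhom (sup_le Hmu h) => /sup2_ub []. Qed.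

End Main.

Theorem theorem2p10 (R : realType) (E F : lmodType R)
    (mu : E -> E -> R) (nu : F -> F -> R) (T : {linear E -> F}) :
  fuzzy_riesz_space mu -> fuzzy_riesz_space nu ->
  fuzzy_riesz_hom mu nu T -> (forall y : F, exists x : E, T x = y) ->
  [<-> fuzzy_riesz_sigma_hom mu nu T;
       (forall A : set F, fuzzy_sigma_ideal nu A -> fuzzy_sigma_ideal mu (T @^-1` A));
       fuzzy_sigma_ideal mu [set x | T x = 0]].
Proof.
move=> [Hmu Lmu] [Hnu Lnu] Hhom Hsurj.
have mono := monoT Hmu Hhom.
tfae.
- move=> H1 A [[[A0 AD AZ] Aid] Asig].
  split; [split; [split|]|].
  + by rewrite /preimage /= linear0.
  + by move=> x y; rewrite /preimage /= linearD; apply: AD.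
  + by move=> a x; rewrite /preimage /= linearZ; apply: AZ.
  + move=> x y ax ay Hax Hay Hle Ay; apply: (Aid (T x) (T y) (T ax) (T ay)) => //.
    * by have := Hhom _ _ _ Hax; rewrite /is_abs linearN.
    * by have := Hhom _ _ _ Hay; rewrite /is_abs linearN.
    * exact: mono.
  + move=> xn x Hn [Hinc Hsup]; apply: (Asig (fun n => T (xn n)) (T x)).
    * move=> n; split; first exact: (Hn n).1.
      by rewrite -(linear0 T); apply: mono; exact: (Hn n).2.
    * split; first by move=> n; apply: mono.
      exact: H1.2 _ _ Hsup.
- move=> H2; apply: (H2 [set y | y = 0]).
  split; [split; [split|]|].
  + by [].
  + by move=> x y /= -> ->; rewrite addr0.
  + by move=> a x /= ->; rewrite scaler0.
  + move=> x y ax ay Hax Hay Hle /= Ey; subst y.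
    have ay0 : ay = 0.
      apply: (sup_unique Hnu Hay); rewrite oppr0; apply: sup_le => //; exact: fle_refl.
    subst ay; have [h1 h2] := sup2_ub Hax.
    have x0 : fle nu x 0 := fle_trans Hnu h1 Hle.
    have nx0 : fle nu (- x) 0 := fle_trans Hnu h2 Hle.
    apply: (fle_anti Hnu) => //.
    by have := fle_add Hnu x nx0; rewrite addNr add0r.
  + move=> xn x Hn [_ [ub lst]] /=.
    apply: (fle_anti Hnu).
    * by apply: lst => b [n _ <-]; rewrite (Hn n).1; apply: fle_refl.
    * by have := ub (xn 0%N) (ex_intro2 _ _ 0%N I erefl); rewrite (Hn 0%N).1.
- move=> [_ Ksig]; split => // xn x Hx.
  have [j Hj] := choice (fun p : E * E => (Lmu p.1 p.2).1).
  have Hj' : forall a b, is_sup mu [set a; b] (j (a, b)) by move=> a b; exact: (Hj (a, b)).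
  split.
  + by move=> b [n _ <-]; apply: mono; apply: Hx.1; exists n.
  + move=> v Hv; have [w Ew] := Hsurj v; subst v.
    pose z : nat -> E := nat_rect (fun _ => E : Type) (xn 0%N) (fun n (zn : E) => j (zn, xn n.+1)).
    have zS : forall n, z n.+1 = j (z n, xn n.+1) by [].
    have zT : forall n, fle nu (T (z n)) (T w).
      elim=> [|n IH]; first by apply: Hv; exists 0%N.
      rewrite zS; apply: (sup2_least (Hhom _ _ _ (Hj' _ _))) => //.
      by apply: Hv; exists n.+1.
    have zx : forall n, fle mu (z n) x.
      elim=> [|n IH]; first by apply: Hx.1; exists 0%N.
      rewrite zS; apply: (sup2_least (Hj' _ _)) => //.
      by apply: Hx.1; exists n.+1.
    have zinc n : fle mu (z n) (z n.+1).
      by rewrite zS; exact: (sup2_ub (Hj' _ _)).1.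
    have xz : forall n, fle mu (xn n) (z n).
      case=> [|n]; first exact: fle_refl.
      by rewrite zS; exact: (sup2_ub (Hj' _ _)).2.
    pose a n := j (z n - w, 0).
    pose b := j (x - w, 0).
    have aK : forall n, T (a n) = 0.
      move=> n; have := Hhom _ _ _ (Hj' (z n - w) 0); rewrite linearB linear0 => h.
      apply: (sup_unique Hnu h); apply: (sup_le Hnu).
      by have := fle_add Hnu (- T w) (zT n); rewrite subrr.
    have apos n : fle mu 0 (a n) by exact: (sup2_ub (Hj' _ _)).2.
    have za n : fle mu (z n - w) (a n) by exact: (sup2_ub (Hj' _ _)).1.
    have ainc : forall n, fle mu (a n) (a n.+1).
      move=> n; apply: (sup2_least (Hj' _ _)) => //.
      apply: (fle_trans Hmu (fle_add Hmu _ (zinc n))); exact: za.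
    have asup : is_sup mu (range a) b.
      split.
      * move=> c [n _ <-]; apply: (sup2_least (Hj' _ _)).
        - apply: (fle_trans Hmu (fle_add Hmu _ (zx n))); exact: (sup2_ub (Hj' _ _)).1.
        - exact: (sup2_ub (Hj' _ _)).2.
      * move=> u hu; have hu' : forall n, fle mu (a n) u by move=> n; apply: hu; exists n.
        apply: (sup2_least (Hj' _ _)); last exact: (fle_trans Hmu (apos 0%N) (hu' 0%N)).
        apply: (fle_addK Hmu (c := w)); rewrite subrK.
        apply: Hx.2 => c [n _ <-].
        apply: (fle_trans Hmu (xz n)).
        have := fle_add Hmu w (fle_trans Hmu (za n) (hu' n)); rewrite subrK; exact.
    have bK : T b = 0 by apply: (Ksig a b) => //; split.
    have := (sup2_ub (Hhom _ _ _ (Hj' (x - w) 0))).1; rewrite -/b bK linearB => h.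
    by have := fle_add Hnu (T w) h; rewrite subrK add0r.
Qed.
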